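(* Let $m\in\mathbb{N}^+$. There exist $\delta=\delta(m)>0$ and a constant $C>0$ independent of $m$ such that $$|y|^2\,|u^{(m)}_p(y)|^{p-1}\leq C\qquad\text{for all }y\in B\text{ and all }p\in(p_S-\delta,p_S).$$
   Context: Standing setting: $N\geq3$, $B$ unit ball of $\mathbb{R}^N$ centered at $0$, $p_S=\frac{N+2}{N-2}$. $u^{(m)}_p$ is the unique radial solution of $-\Delta u=|u|^{p-1}u$ in $B$, $u=0$ on $\partial B$, with exactly $m$ nodal regions and $u^{(m)}_p(0)>0$. *)

(* Defs.v *)
From Stdlib Require Import Reals Lra.
Open Scope R_scope.

(* a^e for a >= 0 and real e, with the convention 0^e = 0 (used with e = p-1 > 0). *)
Definition rpow (a e : R) : R := if Rle_dec a 0 then 0 else Rpower a e.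

Definition pS (N : nat) : R := (INR N + 2) / (INR N - 2).

(* v is the radial profile (u(x) = v(|x|)) of a classical solution of
   -Δu = |u|^{p-1} u in the unit ball B of R^N, u = 0 on ∂B, u ∈ C^2(B) ∩ C(closure B).
   v is taken even and twice differentiable on (-1,1) (regularity of x ↦ v(|x|) at 0),
   Δu = v'' + (N-1)/r v' for 0 < r < 1, v left-continuous at 1 with v(1) = 0. *)
Definition radial_solution (N : nat) (p : R) (v : R -> R) : Prop :=
  exists v' v'' : R -> R,
    (forall r, -1 < r < 1 ->
        derivable_pt_lim v r (v' r) /\ derivable_pt_lim v' r (v'' r)) /\
    (forall r, v (- r) = v r) /\
    (forall r, 0 < r < 1 ->
        v'' r + (INR N - 1) / r * v' r + rpow (Rabs (v r)) (p - 1) * v r = 0) /\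
    v 1 = 0 /\
    (forall eps, eps > 0 -> exists d, d > 0 /\
        forall r, 1 - d < r <= 1 -> Rabs (v r - v 1) < eps).

(* The radial function x ↦ v(|x|) has exactly m nodal regions (connected components of
   {x ∈ B : u(x) ≠ 0}): there are radii 0 = r_0 < r_1 < ... < r_m = 1 such that the zero
   set of v on [0,1) is exactly {r_1, ..., r_{m-1}}; the nodal regions are then the ball
   {|x| < r_1} and the annuli {r_{i-1} < |x| < r_i}. *)
Definition has_nodal_regions (m : nat) (v : R -> R) : Prop :=
  exists rad : nat -> R,
    rad 0%nat = 0 /\ rad m = 1 /\
    (forall i, (i < m)%nat -> rad i < rad (S i)) /\
    (forall r, 0 <= r < 1 ->
       (v r = 0 <-> exists i, (1 <= i)%nat /\ (i < m)%nat /\ r = rad i)).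

Definition nodal_radial_solution (N : nat) (p : R) (m : nat) (v : R -> R) : Prop :=
  radial_solution N p v /\ has_nodal_regions m v /\ v 0 > 0.

(* Main.v *)
Require Import Defs.
From Stdlib Require Import Reals Lra Lia Classical.
From Coquelicot Require Import Coquelicot.
Open Scope R_scope.

Lemma dpl_loc (f g : R -> R) x l d : 0 < d ->
  (forall y, Rabs (y - x) < d -> g y = f y) ->
  derivable_pt_lim f x l -> derivable_pt_lim g x l.
Proof.
  intros Hd Hfg Hf eps He.
  destruct (Hf eps He) as [del Hdel].
  assert (Hm : 0 < Rmin del d) by (apply Rmin_glb_lt; [apply cond_pos|lra]).
  exists (mkposreal _ Hm). intros h hn hl. simpl in hl.
  rewrite (Hfg (x+h)), (Hfg x).
  - apply Hdel; auto. apply Rlt_le_trans with (1:=hl). apply Rmin_l.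
  - rewrite Rminus_diag, Rabs_R0; lra.
  - replace (x+h-x) with h by ring. apply Rlt_le_trans with (1:=hl). apply Rmin_r.
Qed.

Lemma cont_eps (f : R -> R) x eps : continuity_pt f x -> 0 < eps ->
  exists d, 0 < d /\ forall y, Rabs (y - x) < d -> Rabs (f y - f x) < eps.
Proof.
  intros Hc He. destruct (Hc eps He) as [d [Hd H]].
  exists d; split; auto. intros y Hy.
  destruct (Req_dec y x) as [->|Hn].
  - rewrite Rminus_diag, Rabs_R0; lra.
  - simpl in H. unfold R_dist in H. apply H. unfold D_x, no_cond. repeat split; auto.
Qed.

Lemma dpl_cont f x l : derivable_pt_lim f x l -> continuity_pt f x.
Proof. intro H. apply derivable_continuous_pt. exists l. exact H. Qed.

Lemma rpow_pos a e : 0 < a -> rpow a e = Rpower a e.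
Proof. intro H. unfold rpow. destruct (Rle_dec a 0); lra. Qed.

Lemma rpow_zero e : rpow 0 e = 0.
Proof. unfold rpow. destruct (Rle_dec 0 0); lra. Qed.

Lemma rpow_ge0 a e : 0 <= rpow a e.
Proof. unfold rpow. destruct (Rle_dec a 0). lra. unfold Rpower. left; apply exp_pos. Qed.

Lemma Rpower_sq a : 0 < a -> Rpower a 2 = a ^ 2.
Proof. intro H. replace 2 with (INR 2) by (simpl; ring). apply Rpower_pow; auto. Qed.

Lemma Rpower_add2 a e : 0 < a -> Rpower a (e + 2) = a^2 * Rpower a e.
Proof. intro H. rewrite Rpower_plus, Rpower_sq; auto; ring. Qed.

Lemma exp_le x y : x <= y -> exp x <= exp y.
Proof. intro H. destruct (Rle_lt_or_eq_dec _ _ H). left; apply exp_increasing; auto. subst; lra. Qed.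

Lemma ln_le x y : 0 < x -> x <= y -> ln x <= ln y.
Proof. intros H H1. destruct (Rle_lt_or_eq_dec _ _ H1). left; apply ln_increasing; auto. subst; lra. Qed.

Lemma exp_le_inv x y : exp x <= exp y -> x <= y.
Proof. intro H. destruct (Rle_or_lt x y); auto. pose proof (exp_increasing _ _ H0). lra. Qed.

Lemma rpow_le_sq a e : 0 <= a <= 1 -> 2 <= e -> rpow a e <= a ^ 2.
Proof.
  intros Ha He. unfold rpow. destruct (Rle_dec a 0). pose proof (pow2_ge_0 a); lra.
  rewrite <- Rpower_sq by lra. unfold Rpower. apply exp_le_3 || idtac.
  destruct (Rle_lt_or_eq_dec _ _ (proj2 Ha)) as [Hlt|Heq].
  - assert (ln a < 0). { rewrite <- ln_1. apply ln_increasing; lra. }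
    apply exp_le. nra.
  - subst. rewrite ln_1. right; f_equal; ring.
Qed.

Definition bet p := 2 / (p - 1).
Definition alp (N : nat) p := 2 * bet p + 2 - INR N.
Definition bb (N : nat) p := bet p * (INR N - 2 - bet p).
Definition Af p (v : R -> R) r := exp (bet p * ln r) * v r.
Definition Bf p (v v' : R -> R) r := exp (bet p * ln r) * (bet p * v r + r * v' r).
Definition Kf p (v : R -> R) r := r ^ 2 * rpow (Rabs (v r)) (p - 1).
Definition Tf p (v : R -> R) r := rpow (Rabs (v r)) (p + 1).
Definition Wf p v r := exp ((2 * bet p + 2) * ln r) * Tf p v r.
Definition Ef N p v v' r :=
  Bf p v v' r ^ 2 / 2 - bb N p * Af p v r ^ 2 / 2 + Wf p v r / (p + 1).

Lemma dT p v v' r : 1 < p -> is_derive v r (v' r) ->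
  is_derive (Tf p v) r ((p + 1) * rpow (Rabs (v r)) (p - 1) * v r * v' r).
Proof.
  intros Hp Hd.
  destruct (Req_dec (v r) 0) as [H0|Hn].
  - rewrite H0, Rmult_0_r, Rmult_0_l.
    apply is_derive_Reals. apply is_derive_Reals in Hd.
    intros eps He.
    destruct (Hd 1 Rlt_0_1) as [del Hdel].
    set (C := Rabs (v' r) + 1).
    assert (HC : 0 < C) by (unfold C; pose proof (Rabs_pos (v' r)); lra).
    assert (Hm : 0 < Rmin del (Rmin (/ C) (eps / (C * C)))).
    { apply Rmin_glb_lt. apply cond_pos. apply Rmin_glb_lt. apply Rinv_0_lt_compat; lra.
      apply Rdiv_lt_0_compat; nra. }
    exists (mkposreal _ Hm). intros h hn hl. simpl in hl.
    assert (h1 : Rabs h < del) by (eapply Rlt_le_trans; [exact hl| apply Rmin_l]).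
    assert (h2 : Rabs h < / C) by (eapply Rlt_le_trans; [exact hl|]; eapply Rle_trans; [apply Rmin_r|apply Rmin_l]).
    assert (h3 : Rabs h < eps / (C * C)) by (eapply Rlt_le_trans; [exact hl|]; eapply Rle_trans; [apply Rmin_r|apply Rmin_r]).
    specialize (Hdel h hn h1). rewrite H0, Rminus_0_r in Hdel.
    assert (Hb : Rabs (v (r + h)) <= C * Rabs h).
    { replace (v (r+h)) with ((v (r + h) / h - v' r) * h + v' r * h) by (field; auto).
      eapply Rle_trans. apply Rabs_triang. rewrite !Rabs_mult. unfold C.
      pose proof (Rabs_pos h). pose proof (Rabs_pos (v' r)).
      pose proof (Rmult_le_compat_r (Rabs h) _ _ H (Rlt_le _ _ Hdel)). lra. }
    unfold Tf. rewrite H0, Rabs_R0, rpow_zero, Rminus_0_r, Rminus_0_r.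
    assert (Hh : 0 < Rabs h) by (apply Rabs_pos_lt; auto).
    assert (Hch : C * Rabs h < 1).
    { apply Rmult_lt_reg_r with (/ C). apply Rinv_0_lt_compat; lra.
      rewrite Rmult_1_l. replace (C * Rabs h * / C) with (Rabs h) by (field; lra). lra. }
    assert (Hr : rpow (Rabs (v (r + h))) (p + 1) <= Rabs (v (r+h)) ^ 2).
    { apply rpow_le_sq. split. apply Rabs_pos. lra. lra. }
    pose proof (rpow_ge0 (Rabs (v (r + h))) (p + 1)).
    rewrite Rabs_div by auto. rewrite (Rabs_pos_eq (rpow _ _)) by auto.
    apply Rmult_lt_reg_r with (Rabs h); auto.
    unfold Rdiv. rewrite Rmult_assoc, Rinv_l, Rmult_1_r by lra.
    apply Rle_lt_trans with (Rabs (v (r + h)) ^ 2); auto.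
    apply Rle_lt_trans with ((C * Rabs h) ^ 2).
    { pose proof (Rabs_pos (v (r+h))). apply pow_incr. lra. }
    apply Rmult_lt_reg_r with (/ (C * C)). apply Rinv_0_lt_compat; nra.
    replace ((C * Rabs h) ^ 2 * / (C * C)) with (Rabs h * Rabs h) by (field; lra).
    replace (eps * Rabs h * / (C * C)) with (eps / (C * C) * Rabs h) by (field; lra).
    apply Rmult_lt_compat_r; auto.
  - assert (Hc : continuity_pt v r) by (apply dpl_cont with (v' r); apply is_derive_Reals; auto).
    assert (Hva : 0 < Rabs (v r)) by (apply Rabs_pos_lt; auto).
    destruct (cont_eps v r (Rabs (v r)) Hc Hva) as [d [Hd0 Hdd]].
    apply is_derive_Reals.
    apply (dpl_loc (fun y => exp ((p + 1) / 2 * ln (v y * v y)))) with d; auto.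
    + intros y Hy. specialize (Hdd y Hy). unfold Tf.
      assert (Hy0 : v y <> 0).
      { intro E. rewrite E, Rminus_0_l, Rabs_Ropp in Hdd. lra. }
      rewrite rpow_pos by (apply Rabs_pos_lt; auto). unfold Rpower. f_equal.
      replace (v y * v y) with (Rabs (v y) * Rabs (v y)).
      rewrite ln_mult by (apply Rabs_pos_lt; auto). field.
      rewrite <- Rabs_mult. apply Rabs_pos_eq. nra.
    + apply is_derive_Reals. auto_derive.
      * repeat split; try (exists (v' r); exact Hd). nra.
      * replace (Derive (fun x => v x) r) with (v' r) by (symmetry; apply is_derive_unique; exact Hd).
        rewrite rpow_pos by auto.
        replace (v r * v r) with (Rabs (v r) * Rabs (v r)).
        rewrite ln_mult by auto.
        replace (p - 1) with ((p + 1) + - 2) by ring.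
        rewrite Rpower_plus. unfold Rpower.
        replace (- 2 * ln (Rabs (v r))) with (- (ln (Rabs (v r)) + ln (Rabs (v r)))) by ring.
        rewrite exp_Ropp, exp_plus, exp_ln by auto.
        replace ((p + 1) * ln (Rabs (v r))) with ((p + 1) / 2 * (ln (Rabs (v r)) + ln (Rabs (v r)))) by field.
        assert (Rabs (v r) * Rabs (v r) = v r * v r).
        { rewrite <- Rabs_mult. apply Rabs_pos_eq. nra. }
        field_simplify; auto; try lra. field. lra.
        rewrite <- Rabs_mult. apply Rabs_pos_eq. nra.
Qed.

Lemma Tf_eq p v r : 1 < p -> Tf p v r = v r ^ 2 * rpow (Rabs (v r)) (p - 1).
Proof.
  intro Hp. unfold Tf. destruct (Req_dec (v r) 0) as [H|H].
  - rewrite H, Rabs_R0, !rpow_zero. ring.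
  - assert (0 < Rabs (v r)) by (apply Rabs_pos_lt; auto).
    rewrite !rpow_pos by auto. replace (p + 1) with ((p - 1) + 2) by ring.
    rewrite Rpower_add2 by auto. rewrite pow2_abs. ring.
Qed.

Lemma exp_bl p r : 0 < r -> exp ((2 * bet p + 2) * ln r) = exp (bet p * ln r) ^ 2 * r ^ 2.
Proof.
  intro Hr. replace ((2 * bet p + 2) * ln r) with (bet p * ln r + bet p * ln r + (ln r + ln r)) by ring.
  rewrite !exp_plus, exp_ln by auto. ring.
Qed.

Lemma dA p v v' r : 0 < r -> is_derive v r (v' r) ->
  is_derive (Af p v) r (Bf p v v' r / r).
Proof.
  intros Hr Hd. unfold Af, Bf. auto_derive.
  - split; auto. split; auto. exists (v' r); auto.
  - replace (Derive (fun x => v x) r) with (v' r) by (symmetry; apply is_derive_unique; exact Hd).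
    field. lra.
Qed.

Lemma dB N p v v' v'' r : 0 < r -> 1 < p -> is_derive v r (v' r) -> is_derive v' r (v'' r) ->
  v'' r + (INR N - 1) / r * v' r + rpow (Rabs (v r)) (p - 1) * v r = 0 ->
  is_derive (Bf p v v') r
    ((alp N p * Bf p v v' r + bb N p * Af p v r - Kf p v r * Af p v r) / r).
Proof.
  intros Hr Hp Hd Hd' Hode. unfold Af, Bf, Kf, alp, bb. auto_derive.
  - split; auto. split. exists (v' r); auto. split; auto. exists (v'' r); auto.
  - replace (Derive (fun x => v x) r) with (v' r) by (symmetry; apply is_derive_unique; exact Hd).
    replace (Derive (fun x => v' x) r) with (v'' r) by (symmetry; apply is_derive_unique; exact Hd').
    replace (v'' r) with (- ((INR N - 1) / r * v' r) - rpow (Rabs (v r)) (p - 1) * v r) by lra.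
    unfold bet. field. lra.
Qed.

Lemma dE N p v v' v'' r : 0 < r -> 1 < p -> is_derive v r (v' r) -> is_derive v' r (v'' r) ->
  v'' r + (INR N - 1) / r * v' r + rpow (Rabs (v r)) (p - 1) * v r = 0 ->
  is_derive (Ef N p v v') r (alp N p * Bf p v v' r ^ 2 / r).
Proof.
  intros Hr Hp Hd Hd' Hode.
  pose proof (dA p v v' r Hr Hd) as HA.
  pose proof (dB N p v v' v'' r Hr Hp Hd Hd' Hode) as HB.
  pose proof (dT p v v' r Hp Hd) as HT.
  unfold Ef, Wf. auto_derive.
  - repeat split; auto; try (eexists; eauto).
  - replace (Derive (fun x => Af p v x) r) with (Bf p v v' r / r) by (symmetry; apply is_derive_unique; exact HA).
    replace (Derive (fun x => Bf p v v' x) r) with ((alp N p * Bf p v v' r + bb N p * Af p v r - Kf p v r * Af p v r) / r) by (symmetry; apply is_derive_unique; exact HB).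
    replace (Derive (fun x => Tf p v x) r) with ((p + 1) * rpow (Rabs (v r)) (p - 1) * v r * v' r) by (symmetry; apply is_derive_unique; exact HT).
    rewrite Tf_eq by auto. rewrite exp_bl by auto.
    unfold Af, Bf, Kf, alp, bb. unfold bet. field. lra.
Qed.

Lemma cont_ind (P : R -> Prop) x y : x <= y -> P x ->
  (forall t, x <= t < y -> (forall s, x <= s <= t -> P s) ->
     exists h, 0 < h /\ forall s, t < s < t + h -> P s) ->
  (forall t, x < t <= y -> (forall s, x <= s < t -> P s) -> P t) ->
  forall t, x <= t <= y -> P t.
Proof.
  intros Hxy Px Hr Hl.
  set (S := fun s => x <= s <= y /\ forall u, x <= u <= s -> P u).
  assert (Hb : bound S) by (exists y; intros s [Hs _]; lra).
  assert (Hne : exists s, S s) by (exists x; split; [lra| intros u Hu; replace u with x by lra; auto]).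
  destruct (completeness S Hb Hne) as [q [Hub Hlub]].
  assert (Hxq : x <= q) by (apply Hub; split; [lra| intros u Hu; replace u with x by lra; auto]).
  assert (Hqy : q <= y) by (apply Hlub; intros s [Hs _]; lra).
  assert (H1 : forall u, x <= u < q -> P u).
  { intros u Hu. apply NNPP. intro HnP.
    assert (is_upper_bound S u).
    { intros s [Hs Hs2]. destruct (Rle_or_lt s u); auto.
      exfalso. apply HnP. apply Hs2. lra. }
    specialize (Hlub u H). lra. }
  assert (H2 : forall u, x <= u <= q -> P u).
  { intros u Hu. destruct (Rle_lt_or_eq_dec u q (proj2 Hu)) as [Hlt|Heq]. apply H1; lra.
    subst u. destruct (Rle_lt_or_eq_dec x q Hxq) as [Hlt|Heq].
    apply Hl. lra. auto. subst; auto. }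
  destruct (Rle_lt_or_eq_dec q y Hqy) as [Hlt|Heq].
  - exfalso. destruct (Hr q (conj Hxq Hlt) H2) as [h [Hh Hh2]].
    set (s' := Rmin (q + h / 2) y).
    assert (Hs' : q < s') by (unfold s'; apply Rmin_glb_lt; lra).
    assert (S s').
    { split. split. lra. apply Rmin_r.
      intros u Hu. destruct (Rle_or_lt u q). apply H2; lra.
      apply Hh2. split; auto. assert (s' <= q + h/2) by apply Rmin_l. lra. }
    specialize (Hub _ H). lra.
  - subst q. intros t Ht. apply H2. auto.
Qed.

Lemma cont_le_left (f : R -> R) x K a : a < x -> continuity_pt f x ->
  (forall s, a < s < x -> f s <= K) -> f x <= K.
Proof.
  intros Ha Hc H. apply Rnot_lt_le. intro Hlt.
  destruct (cont_eps f x (f x - K) Hc) as [d [Hd Hdd]]; [lra|].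
  set (s := Rmax a (x - d / 2) + (x - Rmax a (x - d/2)) / 2).
  assert (a <= Rmax a (x - d/2)) by apply Rmax_l.
  assert (x - d/2 <= Rmax a (x - d/2)) by apply Rmax_r.
  assert (Rmax a (x - d/2) < x) by (apply Rmax_lub_lt; lra).
  assert (a < s < x) by (unfold s; lra).
  specialize (H s H3). assert (Rabs (s - x) < d) by (rewrite Rabs_left; unfold s in *; lra).
  specialize (Hdd s H4). rewrite Rabs_left1 in Hdd; try lra.
Qed.

Lemma cont_ge_right (f : R -> R) x K b : x < b -> continuity_pt f x ->
  (forall s, x < s < b -> K <= f s) -> K <= f x.
Proof.
  intros Ha Hc H. apply Rnot_lt_le. intro Hlt.
  destruct (cont_eps f x (K - f x) Hc) as [d [Hd Hdd]]; [lra|].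
  set (s := x + (Rmin b (x + d / 2) - x) / 2).
  assert (Rmin b (x + d/2) <= b) by apply Rmin_l.
  assert (Rmin b (x + d/2) <= x + d/2) by apply Rmin_r.
  assert (x < Rmin b (x + d/2)) by (apply Rmin_glb_lt; lra).
  assert (x < s < b) by (unfold s; lra).
  specialize (H s H3). assert (Rabs (s - x) < d) by (rewrite Rabs_right; unfold s in *; lra).
  specialize (Hdd s H4). rewrite Rabs_right in Hdd; try lra.
Qed.

Lemma cont_le_right (f : R -> R) x K b : x < b -> continuity_pt f x ->
  (forall s, x < s < b -> f s <= K) -> f x <= K.
Proof.
  intros Ha Hc H. 
  assert (Hc' : continuity_pt (fun t => - f t) x) by (apply continuity_pt_opp; auto).
  pose proof (cont_ge_right (fun t => - f t) x (- K) b Ha Hc').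
  simpl in H0. assert (- K <= - f x). apply H0. intros s Hs. specialize (H s Hs). lra. lra.
Qed.

Lemma nonincr_mvt (f f' : R -> R) a b : a <= b ->
  (forall c, a <= c <= b -> derivable_pt_lim f c (f' c)) ->
  (forall c, a < c < b -> f' c <= 0) -> f b <= f a.
Proof.
  intros Hab Hd Hs. destruct (Rle_lt_or_eq_dec _ _ Hab) as [Hlt|Heq]; [|subst; lra].
  destruct (MVT_cor2 f f' a b Hlt Hd) as [c [Hc1 Hc2]].
  specialize (Hs c Hc2). nra.
Qed.

Lemma deriv_neg_right (f : R -> R) x l : derivable_pt_lim f x l -> l < 0 ->
  exists h, 0 < h /\ forall s, x < s < x + h -> f s < f x.
Proof.
  intros Hd Hl. destruct (Hd (- l / 2)) as [del Hdel]. lra.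
  exists del. split. apply cond_pos. intros s Hs.
  assert (Hh : s - x <> 0) by lra.
  assert (Habs : Rabs (s - x) < del) by (rewrite Rabs_right; lra).
  specialize (Hdel (s - x) Hh Habs). replace (x + (s - x)) with s in Hdel by ring.
  apply Rabs_def2 in Hdel. destruct Hdel as [H1 H2].
  assert ((f s - f x) / (s - x) < 0) by lra.
  assert (0 < s - x) by lra.
  apply Rmult_lt_compat_r with (r := s - x) in H; auto.
  unfold Rdiv in H. rewrite Rmult_assoc, Rinv_l, Rmult_1_r in H by lra. lra.
Qed.

Definition Sol N p (v v' v'' : R -> R) := forall r, 0 < r < 1 ->
  is_derive v r (v' r) /\ is_derive v' r (v'' r) /\
  v'' r + (INR N - 1) / r * v' r + rpow (Rabs (v r)) (p - 1) * v r = 0.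

Definition Gf c N p v v' r := sqrt (2 * (Ef N p v v' r + c)).

Lemma W_eq p v r : 1 < p -> 0 < r -> Wf p v r = Af p v r ^ 2 * Kf p v r.
Proof. intros Hp Hr. unfold Wf, Af, Kf. rewrite Tf_eq, exp_bl by auto. ring. Qed.

Section S.
Variables (N : nat) (p c : R) (v v' v'' : R -> R).
Hypothesis Hp : 1 < p.
Hypothesis Hsol : Sol N p v v' v''.
Hypothesis Hal : 0 <= alp N p.
Hypothesis Hc : forall r, 0 < r < 1 -> Bf p v v' r ^ 2 + 2 <= 2 * (Ef N p v v' r + c).

Lemma cA r : 0 < r < 1 -> continuity_pt (Af p v) r.
Proof. intro H. destruct (Hsol r H) as [H1 _]. apply dpl_cont with (Bf p v v' r / r).
  apply is_derive_Reals. apply dA; auto; lra. Qed.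

Lemma cB r : 0 < r < 1 -> continuity_pt (Bf p v v') r.
Proof. intro H. destruct (Hsol r H) as [H1 [H2 H3]]. eapply dpl_cont.
  apply is_derive_Reals. apply (dB N p v v' v'' r); auto; lra. Qed.

Lemma dEs r : 0 < r < 1 -> is_derive (Ef N p v v') r (alp N p * Bf p v v' r ^ 2 / r).
Proof. intro H. destruct (Hsol r H) as [H1 [H2 H3]]. apply dE with v''; auto; lra. Qed.

Lemma Gpos r : 0 < r < 1 -> 0 < 2 * (Ef N p v v' r + c).
Proof. intro H. specialize (Hc r H). pose proof (pow2_ge_0 (Bf p v v' r)). lra. Qed.

Lemma dG r (sg : R) : 0 < r < 1 ->
  is_derive (fun t => Gf c N p v v' t - sg * alp N p * Af p v t) r
    (alp N p * Bf p v v' r ^ 2 / r / (Gf c N p v v' r) - sg * alp N p * (Bf p v v' r / r)).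
Proof.
  intro H. pose proof (dEs r H) as HE. destruct (Hsol r H) as [H1 _].
  pose proof (dA p v v' r (proj1 H) H1) as HA.
  pose proof (Gpos r H) as HG.
  unfold Gf. auto_derive.
  - repeat split; try (eexists; eauto); lra.
  - replace (Derive (fun x => Af p v x) r) with (Bf p v v' r / r) by (symmetry; apply is_derive_unique; exact HA).
    replace (Derive (fun x => Ef N p v v' x) r) with (alp N p * Bf p v v' r ^ 2 / r) by (symmetry; apply is_derive_unique; exact HE).
    assert (0 < sqrt (2 * (Ef N p v v' r + c))) by (apply sqrt_lt_R0; auto).
    field. split; lra.
Qed.

Lemma MP x y (sg : R) : 0 < x -> x <= y -> y < 1 -> (sg = 1 \/ sg = -1) ->
  (forall t, x < t < y -> 0 <= sg * Bf p v v' t) ->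
  Gf c N p v v' y - sg * alp N p * Af p v y <= Gf c N p v v' x - sg * alp N p * Af p v x.
Proof.
  intros Hx Hxy Hy Hsg HB.
  apply (nonincr_mvt (fun t => Gf c N p v v' t - sg * alp N p * Af p v t)
     (fun r => alp N p * Bf p v v' r ^ 2 / r / (Gf c N p v v' r) - sg * alp N p * (Bf p v v' r / r))); auto.
  - intros t Ht. apply is_derive_Reals. apply dG. lra.
  - intros t Ht. specialize (HB t Ht).
    assert (Ht1 : 0 < t < 1) by lra.
    pose proof (Gpos t Ht1). pose proof (Hc t Ht1).
    set (B := Bf p v v' t) in *. set (G := Gf c N p v v' t).
    assert (HG2 : G * G = 2 * (Ef N p v v' t + c)) by (apply sqrt_sqrt; lra).
    assert (HG : 0 < G) by (apply sqrt_lt_R0; auto).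
    assert (HBG : B * B <= sg * B * G).
    { assert (Rabs B <= G).
      { assert (B * B <= G * G) by (rewrite HG2; simpl in H0; lra).
        apply Rsqr_incr_0_var. unfold Rsqr. rewrite <- Rabs_mult, Rabs_pos_eq. lra.
        apply Rle_0_sqr. lra. }
      destruct Hsg; subst sg.
      - rewrite Rabs_pos_eq in H1 by lra. nra.
      - rewrite Rabs_left1 in H1 by lra. nra. }
    assert (alp N p * B ^ 2 / t / G - sg * alp N p * (B / t) = alp N p / t / G * (B * B - sg * B * G)) by (field; lra).
    rewrite H1. assert (0 <= alp N p / t / G). { unfold Rdiv. apply Rmult_le_pos. apply Rmult_le_pos; auto. left; apply Rinv_0_lt_compat; lra. left; apply Rinv_0_lt_compat; lra. }
    nra.
Qed.


Hypothesis HE0 : forall r, 0 < r < 1 -> 0 <= Ef N p v v' r.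

Lemma Af_v r : 0 < Af p v r -> 0 < v r.
Proof. unfold Af. intro H. pose proof (exp_pos (bet p * ln r)). nra. Qed.

Lemma Kf_pos r : 0 < r -> v r <> 0 -> 0 < Kf p v r.
Proof. intros Hr Hv. unfold Kf. rewrite rpow_pos by (apply Rabs_pos_lt; auto).
  unfold Rpower. apply Rmult_lt_0_compat; [apply pow_lt; auto | apply exp_pos]. Qed.

Lemma PER q y : 0 < q -> q <= y -> y < 1 -> (forall t, q <= t <= y -> 0 < Af p v t) ->
  Bf p v v' q <= 0 -> forall t, q <= t <= y -> Bf p v v' t <= 0.
Proof.
  intros Hq Hqy Hy HA HBq.
  apply (cont_ind (fun t => Bf p v v' t <= 0)); auto.
  - intros t Ht Hall. assert (Ht1 : 0 < t < 1) by lra.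
    destruct (Rle_lt_or_eq_dec _ _ (Hall t (conj (proj1 Ht) (Rle_refl t)))) as [Hlt|Heq].
    + destruct (cont_eps _ t (- Bf p v v' t) (cB t Ht1)) as [d [Hd Hdd]]; [lra|].
      exists d. split; auto. intros s Hs.
      assert (Rabs (s - t) < d) by (rewrite Rabs_right; lra).
      specialize (Hdd s H). apply Rabs_def2 in Hdd. lra.
    + destruct (Hsol t Ht1) as [H1 [H2 H3]].
      pose proof (dB N p v v' v'' t (proj1 Ht1) Hp H1 H2 H3) as HB.
      apply is_derive_Reals in HB.
      assert (HAt : 0 < Af p v t) by (apply HA; lra).
      assert (HK : 0 < Kf p v t) by (apply Kf_pos; [lra|]; pose proof (Af_v t HAt); lra).
      assert (HKb : bb N p - Kf p v t < 0).
      { specialize (HE0 t Ht1). unfold Ef in HE0. rewrite Heq, W_eq in HE0 by lra.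
        assert (0 < Af p v t ^ 2) by (apply pow_lt; auto).
        assert (0 <= Af p v t ^ 2 * (Kf p v t / (p + 1) - bb N p / 2)).
        { replace (Af p v t ^ 2 * (Kf p v t / (p + 1) - bb N p / 2)) with
            (0 ^ 2 / 2 - bb N p * Af p v t ^ 2 / 2 + Af p v t ^ 2 * Kf p v t / (p + 1)) by (field; lra). auto. }
        assert (0 <= Kf p v t / (p + 1) - bb N p / 2).
        { apply Rmult_le_reg_l with (Af p v t ^ 2); auto. lra. }
        assert (Kf p v t >= (p + 1) * bb N p / 2).
        { apply Rmult_le_compat_l with (r := p + 1) in H4; [|lra].
          replace ((p + 1) * (Kf p v t / (p + 1) - bb N p / 2)) with (Kf p v t - (p + 1) * bb N p / 2) in H4 by (field; lra). lra. }
        destruct (Rle_or_lt (bb N p) 0); nra. }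
      destruct (deriv_neg_right _ t _ HB) as [h [Hh Hhh]].
      { rewrite Heq. replace ((alp N p * 0 + bb N p * Af p v t - Kf p v t * Af p v t) / t)
          with (Af p v t * (bb N p - Kf p v t) / t) by (field; lra).
        unfold Rdiv.
        assert (0 < / t) by (apply Rinv_0_lt_compat; lra).
        assert (Af p v t * (bb N p - Kf p v t) < 0) by nra. nra. }
      exists h. split; auto. intros s Hs. specialize (Hhh s Hs). lra.
  - intros t Ht Hall. assert (Ht1 : 0 < t < 1) by lra.
    apply (cont_le_left _ t 0 q); try lra. apply cB; auto.
    intros s Hs. apply Hall. lra.
Qed.

Lemma NIp x y L : 0 < x -> x <= y -> y < 1 ->
  (forall t, x <= t <= y -> 0 < Af p v t) -> (forall t, x <= t <= y -> Af p v t <= L) ->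
  Gf c N p v v' y <= Gf c N p v v' x + 2 * alp N p * L.
Proof.
  intros Hx Hxy Hy HA HL.
  assert (HAx : 0 < Af p v x) by (apply HA; lra). assert (HAy : 0 < Af p v y) by (apply HA; lra).
  assert (HLx : Af p v x <= L) by (apply HL; lra). assert (HLy : Af p v y <= L) by (apply HL; lra).
  destruct (Rlt_or_le (Bf p v v' x) 0) as [Hneg|Hpos].
  - pose proof (PER x y Hx Hxy Hy HA (Rlt_le _ _ Hneg)) as HP.
    pose proof (MP x y (-1) Hx Hxy Hy (or_intror eq_refl)) as HM.
    assert (Gf c N p v v' y - -1 * alp N p * Af p v y <= Gf c N p v v' x - -1 * alp N p * Af p v x).
    { apply HM. intros t Ht. specialize (HP t ltac:(lra)). lra. }
    nra.
  - set (S := fun t => x <= t <= y /\ forall s, x <= s <= t -> 0 <= Bf p v v' s).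
    assert (Hb : bound S) by (exists y; intros s [Hs _]; lra).
    assert (HSx : S x) by (split; [lra| intros u Hu; replace u with x by lra; auto]).
    destruct (completeness S Hb (ex_intro _ x HSx)) as [q [Hub Hlub]].
    assert (Hxq : x <= q) by (apply Hub; auto).
    assert (Hqy : q <= y) by (apply Hlub; intros s [Hs _]; lra).
    assert (H1 : forall u, x <= u < q -> 0 <= Bf p v v' u).
    { intros u Hu. apply NNPP. intro HnP.
      assert (is_upper_bound S u).
      { intros s [Hs Hs2]. destruct (Rle_or_lt s u); auto.
        exfalso. apply HnP. apply Hs2. lra. }
      specialize (Hlub u H). lra. }
    assert (H3 : forall s, q < s <= y -> Bf p v v' s <= 0).
    { intros s Hs. assert (~ S s) by (intro HS; specialize (Hub s HS); lra).
      assert (~ forall u, x <= u <= s -> 0 <= Bf p v v' u) by (intro; apply H; split; auto; lra).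
      apply not_all_ex_not in H0. destruct H0 as [u Hu].
      apply imply_to_and in Hu. destruct Hu as [Hu1 Hu2].
      assert (q <= u) by (destruct (Rlt_or_le u q); auto; exfalso; apply Hu2; apply H1; lra).
      apply (PER u y); try lra.
      intros t Ht. apply HA. lra. }
    pose proof (MP x q 1 Hx Hxq ltac:(lra) (or_introl eq_refl)) as HM1.
    pose proof (MP q y (-1) ltac:(lra) Hqy Hy (or_intror eq_refl)) as HM2.
    assert (HAq : 0 < Af p v q) by (apply HA; lra).
    assert (HLq : Af p v q <= L) by (apply HL; lra).
    assert (Gf c N p v v' q - 1 * alp N p * Af p v q <= Gf c N p v v' x - 1 * alp N p * Af p v x).
    { apply HM1. intros t Ht. rewrite Rmult_1_l. apply H1. lra. }
    assert (Gf c N p v v' y - -1 * alp N p * Af p v y <= Gf c N p v v' q - -1 * alp N p * Af p v q).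
    { apply HM2. intros t Ht. specialize (H3 t ltac:(lra)). lra. }
    nra.
Qed.

End S.

Lemma Sol_neg N p v v' v'' : Sol N p v v' v'' ->
  Sol N p (fun r => - v r) (fun r => - v' r) (fun r => - v'' r).
Proof.
  intros H r Hr. destruct (H r Hr) as [H1 [H2 H3]]. split; [|split].
  - apply (is_derive_opp v r (v' r)); auto.
  - apply (is_derive_opp v' r (v'' r)); auto.
  - rewrite Rabs_Ropp. lra.
Qed.

Lemma Af_neg p v r : Af p (fun r => - v r) r = - Af p v r.
Proof. unfold Af. ring. Qed.
Lemma Bf_neg p v v' r : Bf p (fun r => - v r) (fun r => - v' r) r = - Bf p v v' r.
Proof. unfold Bf. ring. Qed.
Lemma Ef_neg N p v v' r : Ef N p (fun r => - v r) (fun r => - v' r) r = Ef N p v v' r.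
Proof. unfold Ef, Wf, Tf. rewrite Af_neg, Bf_neg. cbv beta. rewrite Rabs_Ropp. replace ((- Bf p v v' r) ^ 2) with (Bf p v v' r ^ 2) by ring. replace ((- Af p v r) ^ 2) with (Af p v r ^ 2) by ring. reflexivity. Qed.
Lemma Gf_neg c N p v v' r : Gf c N p (fun r => - v r) (fun r => - v' r) r = Gf c N p v v' r.
Proof. unfold Gf. rewrite Ef_neg. auto. Qed.

Lemma sign_const (f : R -> R) x y : x <= y -> (forall t, x <= t <= y -> continuity_pt f t) ->
  (forall t, x <= t <= y -> f t <> 0) -> 0 < f x -> forall t, x <= t <= y -> 0 < f t.
Proof.
  intros Hxy Hc Hn Hx. apply (cont_ind (fun t => 0 < f t)); auto.
  - intros t Ht Hall. destruct (cont_eps f t (f t) (Hc t ltac:(lra))) as [d [Hd Hdd]].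
    apply Hall; lra. exists d. split; auto. intros s Hs.
    assert (Rabs (s - t) < d) by (rewrite Rabs_right; lra).
    specialize (Hdd s H). apply Rabs_def2 in Hdd. lra.
  - intros t Ht Hall. assert (f t <> 0) by (apply Hn; lra).
    assert (0 <= f t).
    { assert (- f t <= 0). 
      apply (cont_le_left (fun u => - f u) t 0 x); try lra.
      apply continuity_pt_opp. apply Hc; lra. intros s Hs. specialize (Hall s ltac:(lra)). lra.
      lra. }
    lra.
Qed.

Lemma cv N p v v' v'' r : Sol N p v v' v'' -> 0 < r < 1 -> continuity_pt v r.
Proof. intros H Hr. destruct (H r Hr) as [H1 _]. apply dpl_cont with (v' r). apply is_derive_Reals; auto. Qed.

Lemma NI N p c v v' v'' x y L : 1 < p -> Sol N p v v' v'' -> 0 <= alp N p ->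
  (forall r, 0 < r < 1 -> Bf p v v' r ^ 2 + 2 <= 2 * (Ef N p v v' r + c)) ->
  (forall r, 0 < r < 1 -> 0 <= Ef N p v v' r) ->
  0 < x -> x <= y -> y < 1 -> (forall t, x <= t <= y -> v t <> 0) ->
  (forall t, x <= t <= y -> Rabs (Af p v t) <= L) ->
  Gf c N p v v' y <= Gf c N p v v' x + 2 * alp N p * L.
Proof.
  intros Hp Hs Ha Hc HE Hx Hxy Hy Hv HL.
  assert (Hcv : forall t, x <= t <= y -> continuity_pt v t) by (intros; eapply cv; eauto; lra).
  destruct (Rlt_or_le 0 (v x)) as [Hpos|Hneg].
  - pose proof (sign_const v x y Hxy Hcv Hv Hpos) as Hsg.
    apply (NIp N p c v v' v''); auto.
    + intros t Ht. unfold Af. apply Rmult_lt_0_compat. apply exp_pos. auto.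
    + intros t Ht. eapply Rle_trans; [apply Rle_abs| apply HL; auto].
  - assert (0 < - v x) by (assert (v x <> 0) by (apply Hv; lra); lra).
    assert (Hcv' : forall t, x <= t <= y -> continuity_pt (fun u => - v u) t) by (intros; apply continuity_pt_opp; auto).
    assert (Hv' : forall t, x <= t <= y -> - v t <> 0) by (intros t Ht; specialize (Hv t Ht); lra).
    pose proof (sign_const (fun u => - v u) x y Hxy Hcv' Hv' H) as Hsg.
    rewrite <- (Gf_neg c N p v v' x), <- (Gf_neg c N p v v' y).
    apply (NIp N p c (fun r => - v r) (fun r => - v' r) (fun r => - v'' r)); auto.
    + apply Sol_neg; auto.
    + intros r Hr. rewrite Bf_neg, Ef_neg. replace ((- Bf p v v' r) ^ 2) with (Bf p v v' r ^ 2) by ring. auto.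
    + intros r Hr. rewrite Ef_neg. auto.
    + intros t Ht. unfold Af. apply Rmult_lt_0_compat. apply exp_pos. apply Hsg; auto.
    + intros t Ht. rewrite Af_neg. eapply Rle_trans; [|apply HL; auto]. rewrite <- Rabs_Ropp. apply Rle_abs.
  auto. Qed.

Lemma E_mono N p v v' v'' x y : 1 < p -> Sol N p v v' v'' -> 0 <= alp N p ->
  0 < x -> x <= y -> y < 1 -> Ef N p v v' x <= Ef N p v v' y.
Proof.
  intros Hp Hs Ha Hx Hxy Hy.
  pose proof (nonincr_mvt (fun t => - Ef N p v v' t) (fun t => - (alp N p * Bf p v v' t ^ 2 / t)) x y Hxy).
  cut (- Ef N p v v' y <= - Ef N p v v' x). lra. apply H.
  - intros t Ht. apply is_derive_Reals. apply (is_derive_opp (Ef N p v v')). 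
    destruct (Hs t ltac:(lra)) as [H1 [H2 H3]]. apply dE with v''; auto; lra.
  - intros t Ht. assert (0 <= alp N p * Bf p v v' t ^ 2 / t).
    { unfold Rdiv. apply Rmult_le_pos. apply Rmult_le_pos; auto. apply pow2_ge_0.
      left; apply Rinv_0_lt_compat; lra. } lra.
Qed.

Lemma bet_pos p : 1 < p -> 0 < bet p.
Proof. intro. unfold bet. apply Rdiv_lt_0_compat; lra. Qed.

Lemma A2_eq p v r : 1 < p -> 0 < r -> v r <> 0 -> Af p v r ^ 2 = Rpower (Kf p v r) (bet p).
Proof.
  intros Hp Hr Hv. assert (Ha : 0 < Rabs (v r)) by (apply Rabs_pos_lt; auto).
  unfold Af, Kf. rewrite rpow_pos by auto. unfold Rpower.
  rewrite ln_mult by (try apply pow_lt; auto; apply exp_pos).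
  rewrite ln_exp. replace (r ^ 2) with (r * r) by ring. rewrite ln_mult by auto.
  replace ((exp (bet p * ln r) * v r) ^ 2) with (exp (bet p * ln r) ^ 2 * Rabs (v r) ^ 2)
    by (rewrite pow2_abs; ring).
  rewrite <- (exp_ln (Rabs (v r))) at 1 by auto.
  replace (bet p * (ln r + ln r + (p - 1) * ln (Rabs (v r)))) with
    (bet p * ln r + bet p * ln r + (ln (Rabs (v r)) + ln (Rabs (v r)))).
  rewrite !exp_plus. simpl. ring.
  unfold bet. field. lra.
Qed.

Lemma rpow_mono a b e : 0 <= e -> 0 <= a <= b -> 0 < b -> rpow a e <= Rpower b e.
Proof.
  intros He Hab Hb. unfold rpow. destruct (Rle_dec a 0). left; apply exp_pos.
  apply Rle_Rpower_l; auto. lra.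
Qed.

Lemma E_small N p v v' r eps : 1 < p -> continuity_pt v 0 -> continuity_pt v' 0 -> 0 < eps -> 0 < r ->
  exists s, 0 < s < r /\ Rabs (Ef N p v v' s) <= eps.
Proof.
  intros Hp Hc1 Hc2 He Hr.
  destruct (cont_eps v 0 1 Hc1 Rlt_0_1) as [d1 [Hd1 Hdd1]].
  destruct (cont_eps v' 0 1 Hc2 Rlt_0_1) as [d2 [Hd2 Hdd2]].
  set (M1 := Rabs (v 0) + 1). set (M2 := Rabs (v' 0) + 1).
  assert (HM1 : 1 <= M1) by (unfold M1; pose proof (Rabs_pos (v 0)); lra).
  assert (HM2 : 1 <= M2) by (unfold M2; pose proof (Rabs_pos (v' 0)); lra).
  set (b := bet p). assert (Hb : 0 < b) by (apply bet_pos; auto).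
  set (R1 := Rpower M1 (p - 1)).
  assert (HR1 : 0 < R1) by (unfold R1, Rpower; apply exp_pos).
  set (Q := (b * M1 + M2) ^ 2 / 2 + Rabs (bb N p) * M1 ^ 2 / 2 + M1 ^ 2 * R1 / (p + 1)).
  assert (HQ : 0 <= Q).
  { unfold Q. assert (0 <= M1 ^ 2 * R1 / (p + 1)).
    { apply Rmult_le_pos. apply Rmult_le_pos. apply pow2_ge_0. lra. left; apply Rinv_0_lt_compat; lra. }
    pose proof (pow2_ge_0 (b * M1 + M2)). pose proof (pow2_ge_0 M1). pose proof (Rabs_pos (bb N p)).
    assert (0 <= Rabs (bb N p) * M1 ^ 2) by (apply Rmult_le_pos; auto). lra. }
  set (z := ln (eps / (Q + 1)) / (2 * b)).
  set (s := Rmin (Rmin (r / 2) (Rmin d1 d2 / 2)) (Rmin (1 / 2) (exp z))).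
  assert (Hs0 : 0 < s).
  { assert (0 < Rmin d1 d2) by (apply Rmin_glb_lt; lra).
    unfold s. apply Rmin_glb_lt; apply Rmin_glb_lt; try lra. apply exp_pos. }
  assert (Hsr : s <= r / 2) by (unfold s; eapply Rle_trans; apply Rmin_l).
  assert (Hsd : s <= Rmin d1 d2 / 2) by (unfold s; eapply Rle_trans; [apply Rmin_l| apply Rmin_r]).
  assert (Hs1 : s <= 1 / 2) by (unfold s; eapply Rle_trans; [apply Rmin_r| apply Rmin_l]).
  assert (Hsz : s <= exp z) by (unfold s; eapply Rle_trans; [apply Rmin_r| apply Rmin_r]).
  assert (Hd12 : Rmin d1 d2 <= d1 /\ Rmin d1 d2 <= d2) by (split; [apply Rmin_l|apply Rmin_r]).
  exists s. split. lra.
  assert (Hv : Rabs (v s) <= M1).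
  { assert (Rabs (s - 0) < d1) by (rewrite Rminus_0_r, Rabs_right; lra).
    specialize (Hdd1 s H). unfold M1. pose proof (Rabs_triang_inv (v s) (v 0)). lra. }
  assert (Hv' : Rabs (v' s) <= M2).
  { assert (Rabs (s - 0) < d2) by (rewrite Rminus_0_r, Rabs_right; lra).
    specialize (Hdd2 s H). unfold M2. pose proof (Rabs_triang_inv (v' s) (v' 0)). lra. }
  set (e := exp (b * ln s)).
  assert (He0 : 0 < e) by apply exp_pos.
  assert (He2 : e ^ 2 <= eps / (Q + 1)).
  { unfold e. replace (exp (b * ln s) ^ 2) with (exp (2 * b * ln s)).
    2:{ replace (2 * b * ln s) with (b * ln s + b * ln s) by ring. rewrite exp_plus. ring. }
    rewrite <- (exp_ln (eps / (Q + 1))) by (apply Rdiv_lt_0_compat; lra).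
    apply exp_le. assert (ln s <= z) by (rewrite <- (ln_exp z); apply ln_le; auto).
    unfold z in H. apply Rmult_le_compat_l with (r := 2 * b) in H; [|lra].
    replace (2 * b * (ln (eps / (Q + 1)) / (2 * b))) with (ln (eps / (Q + 1))) in H by (field; lra). lra. }
  assert (HA : Rabs (Af p v s) <= e * M1).
  { unfold Af. fold b. fold e. rewrite Rabs_mult, (Rabs_pos_eq e) by lra. apply Rmult_le_compat_l; lra. }
  assert (HB : Rabs (Bf p v v' s) <= e * (b * M1 + M2)).
  { unfold Bf. fold b. fold e. rewrite Rabs_mult, (Rabs_pos_eq e) by lra. apply Rmult_le_compat_l; [lra|].
    eapply Rle_trans. apply Rabs_triang. rewrite !Rabs_mult, (Rabs_pos_eq b), (Rabs_pos_eq s) by lra.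
    assert (b * Rabs (v s) <= b * M1) by (apply Rmult_le_compat_l; lra).
    assert (s * Rabs (v' s) <= 1 * M2) by (apply Rmult_le_compat; try apply Rabs_pos; lra). lra. }
  assert (HK : 0 <= Kf p v s <= R1).
  { unfold Kf. pose proof (rpow_ge0 (Rabs (v s)) (p - 1)).
    assert (rpow (Rabs (v s)) (p - 1) <= R1) by (apply rpow_mono; try lra; split; [apply Rabs_pos| auto]).
    assert (s ^ 2 <= 1) by (simpl; nra). split. apply Rmult_le_pos; auto; apply pow2_ge_0. nra. }
  unfold Ef. rewrite W_eq by lra.
  assert (HB2 : Bf p v v' s ^ 2 <= e ^ 2 * (b * M1 + M2) ^ 2).
  { rewrite <- pow2_abs, <- Rpow_mult_distr. apply pow_incr. split; [apply Rabs_pos|auto]. }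
  assert (HA2 : Af p v s ^ 2 <= e ^ 2 * M1 ^ 2).
  { rewrite <- pow2_abs, <- Rpow_mult_distr. apply pow_incr. split; [apply Rabs_pos|auto]. }
  assert (HW : 0 <= Af p v s ^ 2 * Kf p v s / (p + 1) <= e ^ 2 * (M1 ^ 2 * R1 / (p + 1))).
  { split. apply Rmult_le_pos. apply Rmult_le_pos. apply pow2_ge_0. lra. left; apply Rinv_0_lt_compat; lra.
    unfold Rdiv. replace (e ^ 2 * (M1 ^ 2 * R1 * / (p + 1))) with ((e ^ 2 * M1 ^ 2) * R1 * / (p + 1)) by ring.
    apply Rmult_le_compat_r. left; apply Rinv_0_lt_compat; lra.
    apply Rmult_le_compat; try lra. apply pow2_ge_0. }
  assert (Hbb : Rabs (bb N p * Af p v s ^ 2 / 2) <= e ^ 2 * (Rabs (bb N p) * M1 ^ 2 / 2)).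
  { unfold Rdiv. rewrite !Rabs_mult, (Rabs_pos_eq (Af p v s ^ 2)) by apply pow2_ge_0.
    rewrite (Rabs_pos_eq (/ 2)) by lra. pose proof (Rabs_pos (bb N p)).
    replace (e ^ 2 * (Rabs (bb N p) * M1 ^ 2 * / 2)) with (Rabs (bb N p) * (e ^ 2 * M1 ^ 2) * / 2) by ring.
    apply Rmult_le_compat_r. lra. apply Rmult_le_compat_l; auto. }
  pose proof (pow2_ge_0 (Bf p v v' s)).
  assert (Rabs (Bf p v v' s ^ 2 / 2 - bb N p * Af p v s ^ 2 / 2 + Af p v s ^ 2 * Kf p v s / (p + 1)) <= e ^ 2 * Q).
  { unfold Q. eapply Rle_trans. apply Rabs_triang. eapply Rle_trans. apply Rplus_le_compat_r. apply Rabs_triang.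
    rewrite Rabs_Ropp, Rabs_pos_eq by lra. rewrite (Rabs_pos_eq (_ / (p + 1))) by lra. lra. }
  eapply Rle_trans. apply H0.
  assert (Hf : eps / (Q + 1) * Q = eps - eps / (Q + 1)) by (field; lra).
  assert (0 < eps / (Q+1)) by (apply Rdiv_lt_0_compat; lra).
  assert (e^2 * Q <= eps / (Q+1) * Q) by (apply Rmult_le_compat_r; auto).
  lra.
Qed.

Lemma E_nonneg N p v v' v'' : 1 < p -> Sol N p v v' v'' -> 0 <= alp N p ->
  continuity_pt v 0 -> continuity_pt v' 0 -> forall r, 0 < r < 1 -> 0 <= Ef N p v v' r.
Proof.
  intros Hp Hs Ha Hc1 Hc2 r Hr. apply Rnot_lt_le. intro Hlt.
  destruct (E_small N p v v' r (- Ef N p v v' r / 2) Hp Hc1 Hc2) as [s [Hs1 Hs2]]; try lra.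
  pose proof (E_mono N p v v' v'' s r Hp Hs Ha ltac:(lra) ltac:(lra) ltac:(lra)).
  pose proof (Rle_abs (- Ef N p v v' s)). rewrite Rabs_Ropp in H0. lra.
Qed.

Lemma cG c N p v v' v'' r : 1 < p -> Sol N p v v' v'' ->
  (forall r, 0 < r < 1 -> Bf p v v' r ^ 2 + 2 <= 2 * (Ef N p v v' r + c)) ->
  0 < r < 1 -> continuity_pt (Gf c N p v v') r.
Proof.
  intros Hp Hs Hc H. pose proof (dEs N p v v' v'' Hp Hs r H) as HE.
  pose proof (Gpos N p c v v' Hc r H) as HG.
  apply dpl_cont with (alp N p * Bf p v v' r ^ 2 / r / (2 * sqrt (2 * (Ef N p v v' r + c))) * 2).
  apply is_derive_Reals. unfold Gf. auto_derive.
  - repeat split; try (eexists; eauto); lra.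
  - replace (Derive (fun x => Ef N p v v' x) r) with (alp N p * Bf p v v' r ^ 2 / r) by (symmetry; apply is_derive_unique; exact HE).
    assert (0 < sqrt (2 * (Ef N p v v' r + c))) by (apply sqrt_lt_R0; auto).
    field. split; lra.
Qed.

Section G.
Variables (N : nat) (p c : R) (v v' v'' : R -> R) (rad : nat -> R) (m : nat).
Hypothesis Hp : 1 < p.
Hypothesis Hs : Sol N p v v' v''.
Hypothesis Ha : 0 <= alp N p.
Hypothesis Hc : forall r, 0 < r < 1 -> Bf p v v' r ^ 2 + 2 <= 2 * (Ef N p v v' r + c).
Hypothesis Hc1 : continuity_pt v 0.
Hypothesis Hc2 : continuity_pt v' 0.
Hypothesis Hr0 : rad 0%nat = 0.
Hypothesis Hrm : rad m = 1.
Hypothesis Hinc : forall i, (i < m)%nat -> rad i < rad (S i).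
Hypothesis Hz : forall t, 0 <= t < 1 -> (v t = 0 <-> exists i, (1 <= i)%nat /\ (i < m)%nat /\ t = rad i).

Lemma HE : forall r, 0 < r < 1 -> 0 <= Ef N p v v' r.
Proof. apply (E_nonneg N p v v' v''); auto. Qed.

Lemma rad_mono : forall j i, (i < j <= m)%nat -> rad i < rad j.
Proof.
  induction j; intros i Hij. lia.
  destruct (Nat.eq_dec i j) as [->|Hn]. apply Hinc; lia.
  apply Rlt_trans with (rad j). apply IHj; lia. apply Hinc; lia.
Qed.

Lemma rad_le i j : (i <= j <= m)%nat -> rad i <= rad j.
Proof. intro H. destruct (Nat.eq_dec i j). subst; lra. left; apply rad_mono; lia. Qed.

Lemma vnz k t : (k < m)%nat -> rad k < t < rad (S k) -> v t <> 0.
Proof.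
  intros Hk Ht Hv.
  assert (0 <= rad k) by (rewrite <- Hr0; apply rad_le; lia).
  assert (rad (S k) <= 1) by (rewrite <- Hrm; apply rad_le; lia).
  destruct (proj1 (Hz t ltac:(lra)) Hv) as [j [Hj1 [Hj2 ->]]].
  destruct (Nat.le_gt_cases j k).
  - assert (rad j <= rad k) by (apply rad_le; lia). lra.
  - assert (rad (S k) <= rad j) by (apply rad_le; lia). lra.
Qed.

Variables (r L : R).
Hypothesis Hr : 0 < r < 1.
Hypothesis HL0 : 0 <= L.
Hypothesis HL : forall s, 0 < s <= r -> Rabs (Af p v s) <= L.

Let g0 := sqrt (2 * (1 + c)).

Lemma H_int k x s : (k < m)%nat -> rad k < x -> x <= s -> s < rad (S k) -> s <= r -> 0 < x ->
  Gf c N p v v' s <= Gf c N p v v' x + 2 * alp N p * L.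
Proof.
  intros Hk Hx Hxs Hs1 Hsr Hx0.
  apply (NI N p c v v' v''); auto; try lra.
  - apply HE.
  - intros t Ht. apply (vnz k); auto; lra.
  - intros t Ht. apply HL. lra.
Qed.

Lemma claim : forall k, (k < m)%nat -> forall s, rad k < s <= rad (S k) -> s <= r ->
  Gf c N p v v' s <= g0 + 2 * INR (S k) * alp N p * L.
Proof.
  assert (Hend : forall k, (k < m)%nat ->
     (forall s, rad k < s < rad (S k) -> s <= r -> Gf c N p v v' s <= g0 + 2 * INR (S k) * alp N p * L) ->
     forall s, rad k < s <= rad (S k) -> s <= r -> Gf c N p v v' s <= g0 + 2 * INR (S k) * alp N p * L).
  { intros k Hk Hint s Hs1 Hsr. destruct (Rle_lt_or_eq_dec _ _ (proj2 Hs1)) as [Hlt|Heq].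
    - apply Hint; auto. lra.
    - assert (0 <= rad k) by (rewrite <- Hr0; apply rad_le; lia).
      apply (cont_le_left _ s _ (rad k)). lra. apply (cG c N p v v' v''); auto; lra.
      intros s' Hs'. apply Hint; lra. }
  induction k; intros Hk.
  - apply Hend; auto. intros s Hs1 Hsr. rewrite Hr0 in Hs1.
    destruct (E_small N p v v' s 1 Hp Hc1 Hc2 Rlt_0_1 ltac:(lra)) as [s0 [Hs0 Hs0b]].
    assert (Gf c N p v v' s <= Gf c N p v v' s0 + 2 * alp N p * L).
    { apply (H_int 0%nat); auto; lra. }
    assert (Gf c N p v v' s0 <= g0).
    { unfold Gf, g0. apply sqrt_le_1_alt. pose proof (Rle_abs (Ef N p v v' s0)). lra. }
    simpl INR. lra.
  - apply Hend; auto. intros s Hs1 Hsr.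
    assert (Hkz : rad k < (rad (S k))) by (apply Hinc; lia).
    assert (0 <= rad k) by (rewrite <- Hr0; apply rad_le; lia).
    assert (Gz : Gf c N p v v' (rad (S k)) <= g0 + 2 * INR (S k) * alp N p * L).
    { apply IHk. lia. split; [exact Hkz| right; reflexivity]. lra. }
    assert (Gs : Gf c N p v v' s - 2 * alp N p * L <= Gf c N p v v' (rad (S k))).
    { apply (cont_ge_right _ (rad (S k)) _ s). lra. apply (cG c N p v v' v''); auto; lra.
      intros x Hx. assert (Gf c N p v v' s <= Gf c N p v v' x + 2 * alp N p * L).
      { apply (H_int (S k)); auto; lra. } lra. }
    rewrite (S_INR (S k)). lra.
Qed.

Lemma locate : forall k, (k <= m)%nat -> r <= rad k -> exists j, (j < k)%nat /\ rad j < r <= rad (S j).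
Proof.
  induction k; intros Hk Hrk. rewrite Hr0 in Hrk; lra.
  destruct (Rle_or_lt r (rad k)). destruct (IHk ltac:(lia) H) as [j [Hj1 Hj2]]. exists j; split; auto; lia.
  exists k. split; auto; lra.
Qed.

Lemma main_bound : Gf c N p v v' r <= g0 + 2 * INR m * alp N p * L.
Proof.
  destruct (locate m (le_n m) ltac:(rewrite Hrm; lra)) as [j [Hj1 Hj2]].
  eapply Rle_trans. apply (claim j); auto; lra.
  assert (INR (S j) <= INR m) by (apply le_INR; lia).
  assert (0 <= alp N p * L) by (apply Rmult_le_pos; auto). nra.
Qed.

End G.

Lemma sqrt_add_le a b : 0 <= a -> 0 <= b -> sqrt (a + b) <= sqrt a + sqrt b.
Proof.
  intros Ha Hb. pose proof (sqrt_pos a). pose proof (sqrt_pos b).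
  rewrite <- (sqrt_square (sqrt a + sqrt b)) by lra. apply sqrt_le_1_alt.
  pose proof (sqrt_sqrt a Ha). pose proof (sqrt_sqrt b Hb). nra.
Qed.

Lemma Rpower_ge1 K e : 1 <= K -> 0 <= e -> 1 <= Rpower K e.
Proof.
  intros HK He. unfold Rpower. rewrite <- exp_0. apply exp_le.
  assert (0 <= ln K) by (rewrite <- ln_1; apply ln_le; lra). nra.
Qed.

Lemma E_lower N p v v' s : 1 < p -> 0 < s -> 
  (p + 1) * bb N p <= Kf p v s -> 1 <= Kf p v s -> v s <> 0 ->
  Af p v s ^ 2 <= 2 * (p + 1) * Ef N p v v' s /\ Kf p v s <= 2 * (p + 1) * Ef N p v v' s.
Proof.
  intros Hp Hs Hb HK Hv.
  assert (HA1 : 1 <= Af p v s ^ 2) by (rewrite A2_eq by auto; apply Rpower_ge1; auto; left; apply bet_pos; auto).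
  unfold Ef. rewrite W_eq by auto.
  pose proof (pow2_ge_0 (Bf p v v' s)).
  set (A2 := Af p v s ^ 2) in *. set (K := Kf p v s) in *. set (b := bb N p) in *.
  assert (H1 : 2 * (p + 1) * (Bf p v v' s ^ 2 / 2 - b * A2 / 2 + A2 * K / (p + 1)) =
     (p + 1) * Bf p v v' s ^ 2 + A2 * (2 * K - (p + 1) * b)) by (field; lra).
  rewrite H1. split.
  - assert (A2 * (2 * K - (p + 1) * b) >= A2 * K) by nra. nra.
  - assert (A2 * (2 * K - (p + 1) * b) >= A2 * K) by nra. nra.
Qed.

Theorem proposition3p15 :
  forall N : nat, (3 <= N)%nat ->
  exists C : R, C > 0 /\
  forall m : nat, (1 <= m)%nat ->
  exists delta : R, delta > 0 /\
  forall p : R, pS N - delta < p < pS N ->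
  forall v : R -> R, nodal_radial_solution N p m v ->
  forall r : R, 0 <= r < 1 ->
    r ^ 2 * rpow (Rabs (v r)) (p - 1) <= C.
Proof.
  intros N HN.
  assert (Hn : 3 <= INR N) by (replace 3 with (INR 3) by (simpl; ring); apply le_INR; auto).
  set (n := INR N) in *.
  set (pSv := pS N).
  assert (HpS : pSv - 1 = 4 / (n - 2)) by (unfold pSv, pS; fold n; field; lra).
  assert (HpS1 : 1 < pSv) by (assert (0 < 4 / (n - 2)) by (apply Rdiv_lt_0_compat; lra); lra).
  set (b1 := (n - 1) / 2 * (n - 2)).
  assert (Hb1 : 0 < b1) by (unfold b1; nra).
  set (Y1 := 1 + (pSv + 1) * b1).
  assert (HY1 : 1 <= Y1) by (unfold Y1; nra).
  set (Z := Rpower Y1 ((n - 1) / 2)).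
  assert (HZ : 0 < Z) by (unfold Z, Rpower; apply exp_pos).
  set (c := 1 + Z * b1).
  assert (Hc0 : 1 <= c) by (unfold c; nra).
  set (g0 := sqrt (2 * (1 + c))).
  set (EB := 2 * (g0 + sqrt Z) ^ 2).
  assert (HEB : 0 <= EB) by (unfold EB; pose proof (pow2_ge_0 (g0 + sqrt Z)); lra).
  exists (Rmax Y1 (2 * (pSv + 1) * EB)).
  split. { apply Rlt_gt. eapply Rlt_le_trans; [|apply Rmax_l]. lra. }
  intros m Hm.
  assert (Hm1 : 1 <= INR m) by (replace 1 with (INR 1) by (simpl; ring); apply le_INR; auto).
  set (sq := sqrt (pSv + 1)).
  assert (Hsq : 0 <= sq) by apply sqrt_pos.
  set (eps := / (4 * INR m * (sq + 1))).
  assert (Heps : 0 < eps) by (unfold eps; apply Rinv_0_lt_compat; nra).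
  assert (Heps1 : eps <= / 4).
  { unfold eps. apply Rinv_le_contravar. lra. nra. }
  assert (H2me : 2 * INR m * eps * (sq + 1) = / 2) by (unfold eps; field; split; lra).
  set (delta := pSv - 1 - 4 / (n - 2 + eps)).
  assert (Hq : 0 < 4 / (n - 2 + eps)) by (apply Rdiv_lt_0_compat; lra).
  assert (Hq2 : 4 / (n - 2 + eps) < 4 / (n - 2)).
  { unfold Rdiv. apply Rmult_lt_compat_l. lra. apply Rinv_lt_contravar; nra. }
  exists delta. split. { unfold delta. lra. }
  intros p Hpr v [Hrad [Hnod Hv0]] r Hr.
  assert (Hp1 : 4 / (n - 2 + eps) < p - 1) by (unfold delta in Hpr; lra).
  assert (Hp : 1 < p) by lra.
  assert (Hp2 : p - 1 < 4 / (n - 2)) by lra.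
  assert (Hbu : bet p < (n - 2 + eps) / 2).
  { unfold bet. replace ((n - 2 + eps) / 2) with (2 / (4 / (n - 2 + eps))) by (field; lra).
    unfold Rdiv at 1 3. apply Rmult_lt_compat_l. lra. apply Rinv_lt_contravar; nra. }
  assert (Hbl : (n - 2) / 2 < bet p).
  { unfold bet. replace ((n - 2) / 2) with (2 / (4 / (n - 2))) by (field; lra).
    assert (0 < 4 / (n - 2)) by (apply Rdiv_lt_0_compat; lra).
    unfold Rdiv at 1 3. apply Rmult_lt_compat_l. lra. apply Rinv_lt_contravar; nra. }
  assert (Hal0 : 0 <= alp N p) by (unfold alp; fold n; lra).
  assert (Hal1 : alp N p <= eps) by (unfold alp; fold n; lra).
  assert (Hb1' : bet p <= (n - 1) / 2) by lra.
  assert (Hbb : bb N p <= b1).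
  { unfold bb, b1. fold n. assert (0 <= bet p) by lra. nra. }
  destruct Hrad as [v' [v'' [Hd [_ [Hode _]]]]].
  destruct Hnod as [rad [Hr0 [Hrm [Hinc Hz]]]].
  assert (Hs : Sol N p v v' v'').
  { intros t Ht. destruct (Hd t ltac:(lra)) as [H1 H2]. split; [|split].
    apply is_derive_Reals; auto. apply is_derive_Reals; auto. apply Hode; auto. }
  assert (Hc1 : continuity_pt v 0) by (apply dpl_cont with (v' 0); apply (Hd 0); lra).
  assert (Hc2 : continuity_pt v' 0) by (apply dpl_cont with (v'' 0); apply (Hd 0); lra).
  assert (HAZ : forall t, 0 < t -> v t <> 0 -> Kf p v t <= Y1 -> Af p v t ^ 2 <= Z).
  { intros t Ht Hvt HK. rewrite A2_eq by auto.
    pose proof (Kf_pos p v t Ht Hvt).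
    eapply Rle_trans. apply Rle_Rpower_l. left; apply bet_pos; auto. split; eauto.
    apply Rle_Rpower; auto. }
  assert (Hc : forall t, 0 < t < 1 -> Bf p v v' t ^ 2 + 2 <= 2 * (Ef N p v v' t + c)).
  { intros t Ht. unfold Ef. rewrite W_eq by (auto; lra).
    cut (Af p v t ^ 2 * (bb N p / 2 - Kf p v t / (p + 1)) <= Z * b1).
    { intro H. unfold c. assert (Af p v t ^ 2 * (bb N p / 2 - Kf p v t / (p + 1)) =
        bb N p * Af p v t ^ 2 / 2 - Af p v t ^ 2 * Kf p v t / (p + 1)) by (field; lra). lra. }
    destruct (Req_dec (v t) 0) as [Hvt|Hvt].
    { unfold Af. rewrite Hvt. replace ((exp (bet p * ln t) * 0) ^ 2) with 0 by ring. nra. }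
    pose proof (Kf_pos p v t ltac:(lra) Hvt) as HK0.
    pose proof (pow2_ge_0 (Af p v t)) as HA0.
    assert (HKp : 0 < Kf p v t / (p + 1)) by (apply Rdiv_lt_0_compat; lra).
    destruct (Rle_or_lt (Kf p v t) Y1) as [HK|HK].
    - pose proof (HAZ t ltac:(lra) Hvt HK).
      destruct (Rle_or_lt (bb N p) 0). nra.
      assert (Af p v t ^ 2 * (bb N p / 2) <= Z * b1) by nra. nra.
    - assert (Kf p v t / (p + 1) >= bb N p).
      { assert ((p + 1) * bb N p <= Y1).
        { unfold Y1. destruct (Rle_or_lt (bb N p) 0). nra.
          assert ((p + 1) * bb N p <= (pSv + 1) * b1) by (apply Rmult_le_compat; lra). lra. }
        apply Rle_ge. apply Rmult_le_reg_l with (p + 1). lra.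
        replace ((p + 1) * (Kf p v t / (p + 1))) with (Kf p v t) by (field; lra). lra. }
      destruct (Rle_or_lt (bb N p) 0). nra. nra. }
  assert (HE : forall t, 0 < t < 1 -> 0 <= Ef N p v v' t) by (apply (E_nonneg N p v v' v''); auto).
  destruct (Req_dec r 0) as [Hr0'|Hrpos].
  { rewrite Hr0'. replace (0 ^ 2) with 0 by ring. rewrite Rmult_0_l. left. eapply Rlt_le_trans; [|apply Rmax_l]. lra. }
  assert (Hr' : 0 < r < 1) by lra.
  change (r ^ 2 * rpow (Rabs (v r)) (p - 1)) with (Kf p v r).
  destruct (Req_dec (v r) 0) as [Hvr|Hvr].
  { unfold Kf. rewrite Hvr, Rabs_R0, rpow_zero, Rmult_0_r. left. eapply Rlt_le_trans; [|apply Rmax_l]. lra. }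
  destruct (Rle_or_lt (Kf p v r) Y1) as [HKr|HKr].
  { eapply Rle_trans; [exact HKr| apply Rmax_l]. }
  assert (HbY : (p + 1) * bb N p <= Y1).
  { unfold Y1. destruct (Rle_or_lt (bb N p) 0). nra.
    assert ((p + 1) * bb N p <= (pSv + 1) * b1) by (apply Rmult_le_compat; lra). lra. }
  set (Lam := sqrt (Z + 2 * (p + 1) * Ef N p v v' r)).
  assert (HEr : 0 <= Ef N p v v' r) by (apply HE; auto).
  assert (HL : forall s, 0 < s <= r -> Rabs (Af p v s) <= Lam).
  { intros s Hs'. rewrite <- sqrt_Rsqr_abs. unfold Lam. apply sqrt_le_1_alt.
    rewrite Rsqr_pow2.
    assert (Es : Ef N p v v' s <= Ef N p v v' r) by (apply (E_mono N p v v' v''); auto; lra).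
    destruct (Req_dec (v s) 0) as [Hvs|Hvs].
    { unfold Af. rewrite Hvs. replace ((exp (bet p * ln s) * 0) ^ 2) with 0 by ring. nra. }
    destruct (Rle_or_lt (Kf p v s) Y1) as [HK|HK].
    - pose proof (HAZ s ltac:(lra) Hvs HK). nra.
    - destruct (E_lower N p v v' s Hp ltac:(lra) ltac:(lra) ltac:(lra) Hvs). nra. }
  assert (HLam0 : 0 <= Lam) by apply sqrt_pos.
  pose proof (main_bound N p c v v' v'' rad m Hp Hs Hal0 Hc Hc1 Hc2 Hr0 Hrm Hinc Hz r Lam Hr' HLam0 HL) as HMB.
  fold g0 in HMB.
  set (X := sqrt (2 * Ef N p v v' r)).
  assert (HX0 : 0 <= X) by apply sqrt_pos.
  assert (HXG : X <= Gf c N p v v' r) by (unfold X, Gf; apply sqrt_le_1_alt; lra).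
  assert (HLX : Lam <= sqrt Z + sqrt (p + 1) * X).
  { unfold Lam, X. eapply Rle_trans. apply sqrt_add_le. lra. nra.
    rewrite <- sqrt_mult by lra. right. f_equal. f_equal. ring. }
  assert (Hsqp : sqrt (p + 1) <= sq) by (apply sqrt_le_1_alt; lra).
  set (k := 2 * INR m * alp N p).
  assert (Hk0 : 0 <= k) by (unfold k; nra).
  assert (Hk1 : k * (sq + 1) <= / 2).
  { rewrite <- H2me. unfold k. apply Rmult_le_compat_r. lra. nra. }
  assert (HkL : k * Lam <= sqrt Z / 2 + X / 2).
  { pose proof (sqrt_pos Z). pose proof (sqrt_pos (p + 1)).
    assert (k * Lam <= k * sqrt Z + k * sqrt (p + 1) * X) by nra.
    assert (k <= / 2) by nra. assert (k * sqrt (p + 1) <= / 2) by nra. nra. }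
  assert (HX : X <= 2 * (g0 + sqrt Z)).
  { assert (2 * INR m * alp N p * Lam = k * Lam) by (unfold k; ring).
    pose proof (sqrt_pos Z). lra. }
  assert (HEB' : Ef N p v v' r <= EB).
  { assert (X * X = 2 * Ef N p v v' r) by (unfold X; apply sqrt_sqrt; lra).
    unfold EB. pose proof (sqrt_pos Z). pose proof (sqrt_pos (2 * (1 + c))). fold g0 in H0. nra. }
  destruct (E_lower N p v v' r Hp ltac:(lra) ltac:(lra) ltac:(lra) Hvr) as [_ HKE].
  eapply Rle_trans; [|apply Rmax_r]. nra.
Qed.
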